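(* Let $U\subset\mathbb{R}^4$ be a contractible, oriented, relatively compact nonempty open set with coordinates $x^a$, $V\subset\mathbb{R}^{n_s}$ an oriented open set, $\mathcal{J}$ a taming map on $V$ and $(\mathcal{R},\mathcal{I})=\gamma^{-1}(\mathcal{J})$. Let $g$ be a Lorentzian metric on $U$, $\phi\colon U\to V$ smooth, and $\mathcal{V}\in\Omega^2(U,\mathbb{R}^{2n_v})$ with $\ast_g\mathcal{V}=-\mathcal{J}(\phi)\mathcal{V}$; write $\mathcal{V}=(F,G)^t$ with $F=(F^\Lambda)\in\Omega^2(U,\mathbb{R}^{n_v})$. Then for all indices $a,b$, $$2\,\mathcal{I}_{\Lambda\Sigma}(\phi)F^\Lambda_{ac}F^{\Sigma\,c}_{b}-\tfrac12 g_{ab}\,\mathcal{I}_{\Lambda\Sigma}(\phi)F^\Lambda_{cd}F^{\Sigma\,cd}=\omega\big(\mathcal{V}_{ac},\mathcal{J}(\phi)\mathcal{V}_b{}^{c}\big),$$ i.e. the gauge energy momentum tensor $\mathcal{T}(\mathcal{J})(g,\phi,\mathcal{V})$ equals $\omega(\mathcal{V}_{ac},\mathcal{J}\mathcal{V}_b{}^c)\,\mathrm{d}x^a\odot\mathrm{d}x^b$.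
   Context: Indices are raised with $g$ and repeated indices summed. The standard symplectic form $\omega$ on $\mathbb{R}^{2n_v}$ has matrix $\begin{pmatrix}0&-\mathrm{Id}\\ \mathrm{Id}&0\end{pmatrix}$ in the canonical basis. A local electromagnetic structure on $V$ is a pair $(\mathcal{R},\mathcal{I})$ of smooth maps $V\to\mathrm{Sym}(n_v,\mathbb{R})$ with $\mathcal{I}$ pointwise positive definite. A taming map is a smooth $\mathcal{J}\colon V\to\mathrm{Aut}(\mathbb{R}^{2n_v})$ whose values are complex structures $J$ with $\omega(J\cdot,J\cdot)=\omega$ and $\omega(\xi,J\xi)>0$ for $\xi\ne0$. The bijection $\gamma$ from local electromagnetic structures to taming maps sends $(\mathcal{R},\mathcal{I})$ to $\begin{pmatrix}-\mathcal{I}^{-1}\mathcal{R} & \mathcal{I}^{-1}\\ -\mathcal{I}-\mathcal{R}\mathcal{I}^{-1}\mathcal{R} & \mathcal{R}\mathcal{I}^{-1}\end{pmatrix}$. We write $\mathcal{J}(\phi)=\mathcal{J}\circ\phi$, $\mathcal{I}(\phi)=\mathcal{I}\circ\phi$, and $\ast_g$ is the Hodge star of $g$ and the orientation of $U$. *)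

(* Defs.v *)
From HB Require Import structures.
From mathcomp Require Import all_boot all_order all_algebra.
From mathcomp Require Import all_classical all_reals all_analysis.
Set Implicit Arguments.
Unset Strict Implicit.
Unset Printing Implicit Defensive.
Import Order.TTheory GRing.Theory Num.Theory.
Import numFieldNormedType.Exports.
Local Open Scope classical_set_scope.
Local Open Scope ring_scope.

Section Defs.
Variable R : realType.

Fixpoint smooth_order (m : nat) (U : set 'rV[R]_m) (k : nat)
  (f : 'rV[R]_m -> R) : Prop :=
  match k with
  | 0 => forall x, U x -> {for x, continuous f}
  | k'.+1 => (forall x, U x -> forall v, derivable f x v) /\
             (forall v, smooth_order U k' (fun x => derive f x v))
  end.

Definition smooth_on (m : nat) (U : set 'rV[R]_m) (f : 'rV[R]_m -> R) :=
  forall k, smooth_order U k f.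

Definition smooth_mx_on (m p q : nat) (U : set 'rV[R]_m)
  (f : 'rV[R]_m -> 'M[R]_(p, q)) :=
  forall i j, smooth_on U (fun x => f x i j).

Definition contractible (m : nat) (U : set 'rV[R]_m) : Prop :=
  exists x0, U x0 /\
  exists H : R * 'rV[R]_m -> 'rV[R]_m,
    {within `[0, 1] `*` U, continuous H} /\
    (forall t x, 0 <= t <= 1 -> U x -> U (H (t, x))) /\
    (forall x, U x -> H (0, x) = x) /\
    (forall x, U x -> H (1, x) = x0).

Definition relatively_compact (m : nat) (U : set 'rV[R]_m) :=
  compact (closure U).

Definition minkowski : 'M[R]_4 :=
  \matrix_(i, j) (if i == j then (if i == 0 then -1 else 1) else 0).

Definition lorentzian_form (G : 'M[R]_4) : Prop :=
  G^T = G /\ exists P : 'M[R]_4, P \in unitmx /\ P^T *m G *m P = minkowski.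

Definition lorentzian_metric (U : set 'rV[R]_4) (g : 'rV[R]_4 -> 'M[R]_4) :=
  smooth_mx_on U g /\ forall x, U x -> lorentzian_form (g x).

(* Levi-Civita symbol: sign of (a b c d) as a map of 'I_4, 0 if not injective *)
Definition levi (a b c d : 'I_4) : R :=
  \det (\matrix_(i < 4, j < 4) ((tnth [tuple a; b; c; d] i == j)%:R : R)).

(* a 2-form valued in a space of column vectors at a point: its components *)
Definition form2 (k : nat) := 'I_4 -> 'I_4 -> 'cV[R]_k.

Definition antisym (k : nat) (V : form2 k) := forall a b, V a b = - V b a.

(* Hodge star of a 2-form for the metric G and the orientation
   (-1)^o times the standard orientation of R^4 :
   ( *F)_{ab} = 1/2 sqrt|det G| eps_{abcd} G^{ce} G^{df} F_{ef} *)
Definition hodge2 (o : bool) (G : 'M[R]_4) (k : nat) (V : form2 k) : form2 k :=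
  fun a b => ((-1) ^+ o * Num.sqrt `|\det G| / 2) *:
    \sum_(c < 4) \sum_(d < 4) \sum_(e < 4) \sum_(f < 4)
      (levi a b c d * invmx G c e * invmx G d f) *: V e f.

Definition Omega (nv : nat) : 'M[R]_(nv + nv) :=
  block_mx 0 (- 1%:M) 1%:M 0.

Definition omega (nv : nat) (xi eta : 'cV[R]_(nv + nv)) : R :=
  (xi^T *m Omega nv *m eta) 0 0.

Definition taming_cs (nv : nat) (J : 'M[R]_(nv + nv)) : Prop :=
  J *m J = - 1%:M /\
  (forall xi eta, omega (J *m xi) (J *m eta) = omega xi eta) /\
  (forall xi, xi != 0 -> 0 < omega xi (J *m xi)).

Definition taming_map (ns nv : nat) (Vs : set 'rV[R]_ns)
  (J : 'rV[R]_ns -> 'M[R]_(nv + nv)) : Prop :=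
  smooth_mx_on Vs J /\ (forall y, Vs y -> J y \in unitmx /\ taming_cs (J y)).

Definition pos_def (nv : nat) (A : 'M[R]_nv) : Prop :=
  forall u : 'cV[R]_nv, u != 0 -> 0 < (u^T *m A *m u) 0 0.

Definition em_structure (ns nv : nat) (Vs : set 'rV[R]_ns)
  (Rm Im : 'rV[R]_ns -> 'M[R]_nv) : Prop :=
  smooth_mx_on Vs Rm /\ smooth_mx_on Vs Im /\
  (forall y, Vs y -> (Rm y)^T = Rm y /\ (Im y)^T = Im y /\ pos_def (Im y)).

Definition gamma_mx (nv : nat) (Rr Ii : 'M[R]_nv) : 'M[R]_(nv + nv) :=
  block_mx (- (invmx Ii *m Rr)) (invmx Ii)
           (- Ii - Rr *m invmx Ii *m Rr) (Rr *m invmx Ii).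

Definition raise2 (G : 'M[R]_4) (k : nat) (V : form2 k) : form2 k :=
  fun a c => \sum_(d < 4) invmx G d c *: V a d.

Definition raise_both (G : 'M[R]_4) (k : nat) (V : form2 k) : form2 k :=
  fun c d => \sum_(e < 4) \sum_(f < 4) (invmx G c e * invmx G d f) *: V e f.

Definition Fpart (nv : nat) (V : form2 (nv + nv)) : 'I_4 -> 'I_4 -> 'I_nv -> R :=
  fun a b L => usubmx (V a b) L 0.

End Defs.

(* Main.v *)
Require Import Defs.
From HB Require Import structures.
From mathcomp Require Import all_boot all_order all_algebra all_fingroup.
From mathcomp Require Import all_classical all_reals all_analysis.
From mathcomp Require Import ring lra.
Import Order.TTheory GRing.Theory Num.Theory.
Import numFieldNormedType.Exports.
Local Open Scope classical_set_scope.
Local Open Scope ring_scope.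


Definition i0 : 'I_4 := @Ordinal 4 0 isT.
Definition i1 : 'I_4 := @Ordinal 4 1 isT.
Definition i2 : 'I_4 := @Ordinal 4 2 isT.
Definition i3 : 'I_4 := @Ordinal 4 3 isT.

Lemma ord4_ind (P : 'I_4 -> Prop) : P i0 -> P i1 -> P i2 -> P i3 -> forall i, P i.
Proof.
move=> H0 H1 H2 H3 [[|[|[|[|//]]]] Hi].
- by rewrite (_ : Ordinal Hi = i0) //; apply: val_inj.
- by rewrite (_ : Ordinal Hi = i1) //; apply: val_inj.
- by rewrite (_ : Ordinal Hi = i2) //; apply: val_inj.
- by rewrite (_ : Ordinal Hi = i3) //; apply: val_inj.
Qed.

Lemma sum4 (V : zmodType) (F : 'I_4 -> V) : \sum_i F i = F i0 + F i1 + F i2 + F i3.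
Proof.
rewrite !big_ord_recr big_ord0 /= add0r.
do 4 f_equal; apply: val_inj => //.
Qed.

Section L.
Variable R : realType.
Notation levi := (@levi R).

Ltac swap_tac x y :=
  rewrite /levi; let M := fresh "M" in
  set M := \matrix_(i, j) _;
  rewrite (_ : \matrix_(i, j) _ = xrow x y M); [
  by rewrite xrowE det_mulmx det_perm odd_tperm /= expr1 mulN1r opprK|];
  apply/matrixP; apply: ord4_ind => j; rewrite /xrow /row_perm !mxE;
  by rewrite ?tpermL ?tpermR ?tpermD.

Lemma levi_s01 a b c d : levi b a c d = - levi a b c d.
Proof. swap_tac i0 i1. Qed.
Lemma levi_s12 a b c d : levi a c b d = - levi a b c d.
Proof. swap_tac i1 i2. Qed.
Lemma levi_s23 a b c d : levi a b d c = - levi a b c d.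
Proof. swap_tac i2 i3. Qed.

Ltac zero_tac x y :=
  rewrite /levi; apply: (determinant_alternate (i1:=x) (i2:=y)) => // j;
  by rewrite !mxE.
Lemma levi_z01 a c d : levi a a c d = 0. Proof. zero_tac i0 i1. Qed.
Lemma levi_z02 a b d : levi a b a d = 0. Proof. zero_tac i0 i2. Qed.
Lemma levi_z03 a b c : levi a b c a = 0. Proof. zero_tac i0 i3. Qed.
Lemma levi_z12 a b d : levi a b b d = 0. Proof. zero_tac i1 i2. Qed.
Lemma levi_z13 a b c : levi a b c b = 0. Proof. zero_tac i1 i3. Qed.
Lemma levi_z23 a b c : levi a b c c = 0. Proof. zero_tac i2 i3. Qed.

Lemma levi_base : levi i0 i1 i2 i3 = 1.
Proof.
rewrite /levi (_ : \matrix_(i, j) _ = 1%:M) ?det1 //.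
apply/matrixP; apply: ord4_ind => j; by rewrite !mxE.
Qed.
End L.
Arguments levi_s01 {R}. Arguments levi_s12 {R}. Arguments levi_s23 {R}.
Arguments levi_z01 {R}. Arguments levi_z02 {R}. Arguments levi_z03 {R}.
Arguments levi_z12 {R}. Arguments levi_z13 {R}. Arguments levi_z23 {R}.
Arguments levi_base {R}.


Section M.
Variable R : realType.
Notation levi := (@levi R).

Ltac levi_eval :=
  rewrite ?levi_z01 ?levi_z02 ?levi_z03 ?levi_z12 ?levi_z13 ?levi_z23;
  repeat (progress rewrite ?(levi_s01 i0 i1) ?(levi_s01 i0 i2) ?(levi_s01 i0 i3)
     ?(levi_s01 i1 i2) ?(levi_s01 i1 i3) ?(levi_s01 i2 i3)
     ?(levi_s12 _ i0 i1) ?(levi_s12 _ i0 i2) ?(levi_s12 _ i0 i3)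
     ?(levi_s12 _ i1 i2) ?(levi_s12 _ i1 i3) ?(levi_s12 _ i2 i3)
     ?(levi_s23 _ _ i0 i1) ?(levi_s23 _ _ i0 i2) ?(levi_s23 _ _ i0 i3)
     ?(levi_s23 _ _ i1 i2) ?(levi_s23 _ _ i1 i3) ?(levi_s23 _ _ i2 i3));
  rewrite ?levi_base.

Definition epsn (a b c d : nat) : R :=
  if (Nat.eqb a b || Nat.eqb a c || Nat.eqb a d || Nat.eqb b c || Nat.eqb b d || Nat.eqb c d)
  then 0 else
  if xorb (xorb (xorb (Nat.ltb b a) (Nat.ltb c a)) (xorb (Nat.ltb d a) (Nat.ltb c b)))
       (xorb (Nat.ltb d b) (Nat.ltb d c))
  then -1 else 1.
Definition eps (a b c d : 'I_4) := epsn a b c d.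

Lemma leviE a b c d : levi a b c d = eps a b c d.
Proof.
elim/ord4_ind: a; elim/ord4_ind: b; elim/ord4_ind: c; elim/ord4_ind: d;
  rewrite /eps /epsn /=; levi_eval; by rewrite ?opprK.
Qed.

Definition sg4 (i : 'I_4) : R := if i == i0 then -1 else 1.


Lemma mink_core (X Y : 'M[R]_4) :
  (forall i j, X i j = - X j i) -> (forall i j, Y i j = - Y j i) ->
  forall a b,
  4^-1 * \sum_m (\sum_c \sum_d levi a m c d * (sg4 c * sg4 d * X c d)) * sg4 m *
      (\sum_c \sum_d levi b m c d * (sg4 c * sg4 d * Y c d))
  = \sum_m Y a m * sg4 m * X b m
    - 2^-1 * (\sum_c \sum_d X c d * (sg4 c * sg4 d * Y c d)) * (if a == b then sg4 a else 0).
Proof.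
move=> HX HY a b.
have aX i : X i i = 0 by have := HX i i; lra.
have aY i : Y i i = 0 by have := HY i i; lra.
have LE : levi = eps.
  by apply/funext=>a0; apply/funext=>b0; apply/funext=>c0; apply/funext=>d0; exact: leviE.
rewrite LE.
elim/ord4_ind: a; elim/ord4_ind: b;
rewrite !sum4 /eps /epsn /sg4 /=;
rewrite ?aX ?aY (HX i1 i0) (HX i2 i0) (HX i3 i0) (HX i2 i1) (HX i3 i1) (HX i3 i2)
  (HY i1 i0) (HY i2 i0) (HY i3 i0) (HY i2 i1) (HY i3 i1) (HY i3 i2);
by field.
Qed.
End M.


Section T.
Variable R : realType.
Notation levi := (@levi R).

Lemma det_expand n (A B : 'M[R]_n) :
  \det (A *m B) = \sum_(f : 'I_n ^ n) \det (\matrix_(i, j) B (f i) j) * \prod_i A i (f i).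
Proof.
pose F := ('I_n ^ n)%type; pose AB s i j := A i j * B j (s i).
transitivity (\sum_(f : F) \sum_(s : 'S_n) (-1) ^+ s * \prod_i AB s i (f i)).
  rewrite exchange_big; apply: eq_bigr => /= s _; rewrite -big_distrr /=.
  congr (_ * _); rewrite -(bigA_distr_bigA (AB s)) /=.
  by apply: eq_bigr => x _; rewrite mxE.
apply: eq_bigr => f _.
rewrite mulrC big_distrr /=; apply: eq_bigr => s _.
rewrite mulrCA big_split //=; congr (_ * (_ * _)).
by apply: eq_bigr => x _; rewrite mxE.
Qed.

Lemma prod4 (F : 'I_4 -> R) : \prod_i F i = F i0 * F i1 * F i2 * F i3.
Proof.
rewrite !big_ord_recr big_ord0 /= mul1r.
do 4 f_equal; apply: val_inj => //.
Qed.

Definition tf (p : ('I_4 * 'I_4) * ('I_4 * 'I_4)) : 'I_4 ^ 4 :=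
  [ffun k => tnth [tuple p.1.1; p.1.2; p.2.1; p.2.2] k].

Lemma sum_ffun4 (H : 'I_4 -> 'I_4 -> 'I_4 -> 'I_4 -> R) :
  \sum_(f : 'I_4 ^ 4) H (f i0) (f i1) (f i2) (f i3) =
  \sum_i \sum_j \sum_c \sum_d H i j c d.
Proof.
symmetry; rewrite pair_big /=.
under eq_bigr do rewrite pair_big /=.
rewrite pair_big /=; symmetry.
rewrite (reindex tf) /=; last first.
  exists (fun f : 'I_4 ^ 4 => ((f i0, f i1), (f i2, f i3))).
    by move=> [[? ?] [? ?]] _; rewrite /tf !ffunE.
  move=> f _; apply/ffunP; apply: ord4_ind; by rewrite /tf !ffunE.
by apply: eq_bigr => [[[? ?] [? ?]]] _; rewrite /tf !ffunE.
Qed.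

Lemma sum_delta_l n (F : 'I_n -> R) k : \sum_j (k == j)%:R * F j = F k.
Proof.
rewrite (bigD1 k) //= eqxx mul1r big1 ?addr0 // => j.
by rewrite eq_sym => /negbTE ->; rewrite mul0r.
Qed.

Lemma levi_transform (P : 'M[R]_4) a b e f :
  \sum_i \sum_j \sum_c \sum_d levi i j c d * (P i a * P j b * P c e * P d f)
  = \det P * levi a b e f.
Proof.
pose t := [tuple a; b; e; f].
pose A := \matrix_(k, m) P m (tnth t k).
have -> : \det P * levi a b e f = \det A.
  rewrite /levi -(det_tr P) mulrC -det_mulmx; congr (\det _).
  apply/matrixP => k m; rewrite !mxE.
  under eq_bigr do rewrite !mxE.
  by rewrite sum_delta_l.
rewrite -[A]mulmx1 det_expand.
rewrite -(sum_ffun4 (fun i j c d => levi i j c d * (P i a * P j b * P c e * P d f))).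
apply: eq_bigr => g _; rewrite prod4 !mxE /=; congr (_ * _).
rewrite /levi; congr (\det _); apply/matrixP => k m; rewrite !mxE.
by elim/ord4_ind: k.
Qed.

Definition Eh (M : 'M[R]_4) : 'M[R]_4 :=
  \matrix_(a, b) \sum_c \sum_d levi a b c d * M c d.

Lemma sum2_mulr (F : 'I_4 -> 'I_4 -> R) x :
  (\sum_c \sum_d F c d) * x = \sum_c \sum_d F c d * x.
Proof. rewrite mulr_suml; apply: eq_bigr => c _; by rewrite mulr_suml. Qed.

Lemma mulr_sum2 (F : 'I_4 -> 'I_4 -> R) x :
  x * (\sum_c \sum_d F c d) = \sum_c \sum_d x * F c d.
Proof. rewrite mulr_sumr; apply: eq_bigr => c _; by rewrite mulr_sumr. Qed.

Lemma ex22 (g : 'I_4 -> 'I_4 -> 'I_4 -> 'I_4 -> R) :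
  \sum_c \sum_d \sum_e \sum_f g c d e f = \sum_e \sum_f \sum_c \sum_d g c d e f.
Proof.
under eq_bigr do under eq_bigr do rewrite pair_big /=.
rewrite pair_big /= exchange_big /=.
under [RHS]eq_bigr do under eq_bigr do rewrite pair_big /=.
rewrite [RHS]pair_big /=.
by apply: eq_bigr => q _; apply: eq_bigr.
Qed.

Lemma Eh_transform (P N : 'M[R]_4) :
  P^T *m Eh (P *m N *m P^T) *m P = \det P *: Eh N.
Proof.
apply/matrixP => a b; rewrite !mxE.
have H1 c d : (P *m N *m P^T) c d = \sum_e \sum_f P c e * P d f * N e f.
  rewrite !mxE; under eq_bigr => j _ do rewrite !mxE.
  under eq_bigr => j _ do rewrite mulr_suml.
  rewrite exchange_big; apply: eq_bigr => e _; apply: eq_bigr => f _; ring.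
have H2 i j : Eh (P *m N *m P^T) i j =
   \sum_e \sum_f (\sum_c \sum_d levi i j c d * (P c e * P d f)) * N e f.
  rewrite mxE; under eq_bigr do under eq_bigr do rewrite H1 mulr_sum2.
  rewrite ex22; apply: eq_bigr => e _; apply: eq_bigr => f _.
  rewrite sum2_mulr; apply: eq_bigr => c _; apply: eq_bigr => d _; ring.
transitivity (\sum_i \sum_j P i a * P j b * Eh (P *m N *m P^T) i j).
  rewrite exchange_big; apply: eq_bigr => j _; rewrite mxE mulr_suml.
  apply: eq_bigr => i _; rewrite !mxE; ring.
under eq_bigr do under eq_bigr do rewrite H2 mulr_sum2.
rewrite ex22 mulr_sum2; apply: eq_bigr => e _; apply: eq_bigr => f _.
rewrite mulrA -levi_transform sum2_mulr; apply: eq_bigr => i _; apply: eq_bigr => j _.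
rewrite mulrA mulr_sum2 sum2_mulr [RHS]sum2_mulr; apply: eq_bigr => c _; apply: eq_bigr => d _; ring.
Qed.
End T.


Section K.
Variable R : realType.
Notation etaM := (@Defs.minkowski R).
Notation sg4 := (@sg4 R).
Notation Eh := (@Eh R).
Notation levi := (@Defs.levi R).

Lemma etaE i j : etaM i j = if i == j then sg4 i else 0.
Proof. by elim/ord4_ind: i; elim/ord4_ind: j; rewrite !mxE /sg4. Qed.

Lemma eta_tr : etaM^T = etaM.
Proof. by apply/matrixP => i j; rewrite mxE !etaE; elim/ord4_ind: i; elim/ord4_ind: j. Qed.

Lemma mulmx_eta (A : 'M[R]_4) i j : (A *m etaM) i j = A i j * sg4 j.
Proof.
rewrite mxE sum4 !etaE; elim/ord4_ind: j; rewrite /=; ring.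
Qed.

Lemma eta_mulmx (A : 'M[R]_4) i j : (etaM *m A) i j = sg4 i * A i j.
Proof.
rewrite mxE sum4 !etaE; elim/ord4_ind: i; rewrite /=; ring.
Qed.

Lemma eta_eta : etaM *m etaM = 1%:M.
Proof.
apply/matrixP => i j; rewrite mulmx_eta etaE !mxE.
elim/ord4_ind: i; elim/ord4_ind: j; rewrite /sg4 /=; ring.
Qed.

Lemma det_eta : \det etaM = -1.
Proof.
have -> : etaM = diag_mx (\row_i sg4 i).
  apply/matrixP => i j; rewrite etaE !mxE.
  by elim/ord4_ind: i; elim/ord4_ind: j.
by rewrite det_diag prod4 !mxE /sg4 /=; ring.
Qed.

Lemma mink_mx (X Y : 'M[R]_4) : X^T = - X -> Y^T = - Y ->
  4^-1 *: (Eh (etaM *m X *m etaM) *m etaM *m (Eh (etaM *m Y *m etaM))^T)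
  = Y *m etaM *m X^T - (2^-1 * \sum_c \sum_d X c d * (etaM *m Y *m etaM) c d) *: etaM.
Proof.
move=> HX HY.
have AX i j : X i j = - X j i.
  by have := congr1 (fun M : 'M[R]_4 => M j i) HX; rewrite !mxE => ->.
have AY i j : Y i j = - Y j i.
  by have := congr1 (fun M : 'M[R]_4 => M j i) HY; rewrite !mxE => ->.
have EE (Z : 'M[R]_4) a m : Eh (etaM *m Z *m etaM) a m =
    \sum_c \sum_d levi a m c d * (sg4 c * sg4 d * Z c d).
  rewrite mxE; apply: eq_bigr => c _; apply: eq_bigr => d _.
  by rewrite mulmx_eta eta_mulmx; ring.
apply/matrixP => a b.
rewrite [LHS]mxE [X in 4^-1 * X]mxE.
under eq_bigr do rewrite mulmx_eta [_^T _ _]mxE !EE.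
rewrite [in RHS]mxE [X in _ = X + _]mxE [X in _ = _ + X]mxE [X in _ = _ - X]mxE.
rewrite etaE (@mink_core R _ _ AX AY); congr (_ - _ * _ * _).
  by apply: eq_bigr => j _; rewrite mulmx_eta mxE.
apply: eq_bigr => c _; apply: eq_bigr => d _.
by rewrite mulmx_eta eta_mulmx; congr (_ * _); ring.
Qed.

Lemma conj_entry (P N : 'M[R]_4) c d :
  (P *m N *m P^T) c d = \sum_e \sum_f P c e * P d f * N e f.
Proof.
rewrite !mxE; under eq_bigr => j _ do rewrite !mxE.
under eq_bigr => j _ do rewrite mulr_suml.
rewrite exchange_big; apply: eq_bigr => e _; apply: eq_bigr => f _; ring.
Qed.

Lemma sum_conj (P X Z : 'M[R]_4) :
  \sum_c \sum_d X c d * (P *m Z *m P^T) c d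
  = \sum_c \sum_d (P^T *m X *m P) c d * Z c d.
Proof.
have CE c d : (P^T *m X *m P) c d = \sum_e \sum_f P e c * P f d * X e f.
  have := conj_entry P^T X c d; rewrite trmxK => ->.
  by apply: eq_bigr => e _; apply: eq_bigr => f _; rewrite !mxE.
under eq_bigr do under eq_bigr do rewrite conj_entry mulr_sum2.
under [RHS]eq_bigr do under eq_bigr do rewrite CE sum2_mulr.
rewrite ex22; apply: eq_bigr => e _; apply: eq_bigr => f _.
apply: eq_bigr => c _; apply: eq_bigr => d _; ring.
Qed.

Lemma key (Gm P : 'M[R]_4) (k : R) (X Y : 'M[R]_4) :
  P \in unitmx -> P^T *m Gm *m P = etaM -> k ^+ 2 * \det P ^+ 2 = 4^-1 ->
  X^T = - X -> Y^T = - Y ->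
  (k *: Eh (invmx Gm *m X *m (invmx Gm)^T)) *m (invmx Gm)^T
     *m (k *: Eh (invmx Gm *m Y *m (invmx Gm)^T))^T
  = Y *m (invmx Gm)^T *m X^T
    - (2^-1 * \sum_c \sum_d X c d * (invmx Gm *m Y *m (invmx Gm)^T) c d) *: Gm.
Proof.
move=> PU HG Hk HX HY.
set Q := invmx P.
have QP : Q *m P = 1%:M by rewrite mulVmx.
have PQ : P *m Q = 1%:M by rewrite mulmxV.
have QtPt : Q^T *m P^T = 1%:M by rewrite -trmx_mul PQ trmx1.
have PtQt : P^T *m Q^T = 1%:M by rewrite -trmx_mul QP trmx1.
have HGm : Gm = Q^T *m etaM *m Q.
  by rewrite -HG !mulmxA QtPt mul1mx -mulmxA PQ mulmx1.
have HH : invmx Gm = P *m etaM *m P^T.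
  have E : Gm *m (P *m etaM *m P^T) = 1%:M.
    rewrite HGm !mulmxA -(mulmxA (Q^T *m etaM) Q P) QP mulmx1.
    by rewrite -(mulmxA Q^T etaM etaM) eta_eta mulmx1 QtPt.
  have [GU _] := mulmx1_unit E.
  by rewrite -[LHS]mulmx1 -E mulKmx.
have HT : (invmx Gm)^T = invmx Gm by rewrite HH !trmx_mul trmxK eta_tr mulmxA.
rewrite HT HH.
have HXH Z : P *m etaM *m P^T *m Z *m (P *m etaM *m P^T)
    = P *m (etaM *m (P^T *m Z *m P) *m etaM) *m P^T by rewrite !mulmxA.
have EhT N : Eh (P *m N *m P^T) = \det P *: (Q^T *m Eh N *m Q).
  rewrite scalemxAl scalemxAr -Eh_transform.
  by rewrite !mulmxA QtPt mul1mx -(mulmxA _ P Q) PQ mulmx1.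
rewrite !HXH !EhT sum_conj.
have conj_mul (A C : 'M[R]_4) :
    (Q^T *m A *m Q) *m (P *m etaM *m P^T) *m (Q^T *m C *m Q) = Q^T *m (A *m etaM *m C) *m Q.
  rewrite !mulmxA -(mulmxA (Q^T *m A) Q P) QP mulmx1.
  by rewrite -(mulmxA (Q^T *m A *m etaM) P^T Q^T) PtQt mulmx1.
have antiT (Z : 'M[R]_4) : Z^T = - Z -> (P^T *m Z *m P)^T = - (P^T *m Z *m P).
  by move=> HZ; rewrite !trmx_mul trmxK HZ mulNmx mulmxN mulmxA.
have HX' := antiT _ HX. have HY' := antiT _ HY.
set X' := P^T *m X *m P. set Y' := P^T *m Y *m P.
have Yd : Y = Q^T *m Y' *m Q.
  by rewrite /Y' !mulmxA QtPt mul1mx -(mulmxA _ P Q) PQ mulmx1.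
have XdT : X^T = Q^T *m X'^T *m Q.
  by rewrite /X' !trmx_mul trmxK !mulmxA QtPt mul1mx -(mulmxA _ P Q) PQ mulmx1.
have trQ (A : 'M[R]_4) : (Q^T *m A *m Q)^T = Q^T *m A^T *m Q.
  by rewrite !trmx_mul trmxK mulmxA.
rewrite Yd XdT !scalerA linearZ /= -!scalemxAl -scalemxAr scalerA.
rewrite trQ !conj_mul.
have sQ (s0 : R) A : s0 *: (Q^T *m A *m Q) = Q^T *m (s0 *: A) *m Q.
  by rewrite scalemxAl scalemxAr.
rewrite HGm !sQ -mulmxBl -mulmxBr; congr (_ *m _ *m _).
rewrite -(@mink_mx X' Y' HX' HY'); congr (_ *: _).
rewrite -Hk; ring.
Qed.
End K.


Section V.
Variable R : realType.
Variable nv : nat.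

Lemma omega_col (p1 p2 q1 q2 : 'cV[R]_nv) :
  Defs.omega (col_mx p1 p2) (col_mx q1 q2) = (p2^T *m q1 - p1^T *m q2) 0 0.
Proof.
rewrite /Defs.omega /Defs.Omega tr_col_mx mul_row_block !mul_row_col.
rewrite !mulmx0 !mulmx1 add0r addr0 mulmxN mulmx1 mulNmx.
by rewrite addrC.
Qed.

Lemma block_eqs (Rx Ix : 'M[R]_nv) (f g hf hg : 'cV[R]_nv) : Ix \in unitmx ->
  col_mx hf hg = - (gamma_mx Rx Ix *m col_mx f g) ->
  g = Rx *m f - Ix *m hf /\ hg = Ix *m f + Rx *m hf.
Proof.
move=> IU; rewrite /gamma_mx mul_block_col opp_col_mx => E.
have Ehf := congr1 usubmx E; have Ehg := congr1 dsubmx E.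
rewrite !col_mxKu in Ehf; rewrite !col_mxKd in Ehg.
have hfE : hf = invmx Ix *m (Rx *m f - g).
  by rewrite Ehf mulmxBr opprD mulNmx opprK mulmxA addrC.
have g1 : g = Rx *m f - Ix *m hf.
  by rewrite hfE mulmxA mulmxV // mul1mx opprB addrC subrK.
split => //.
rewrite Ehg hfE !mulmxDl !mulmxBr !mulNmx !mulmxA opprD.
by rewrite opprB opprK addrA (addrC (Rx *m _ *m _ *m f)).
Qed.

Lemma posdef_unit (A : 'M[R]_nv) : pos_def A -> A \in unitmx.
Proof.
move=> PA; rewrite unitmxE unitfE; apply/negP => /det0P [v nz vA].
have := PA v^T; rewrite trmx_eq0 nz trmxK vA mul0mx mxE ltxx.
by move/(_ isT).
Qed.

Lemma hodge_comp o (Gm : 'M[R]_4) (W : form2 R nv) a b i :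
  (hodge2 o Gm W a b) i 0 =
  (((-1) ^+ o * Num.sqrt `|\det Gm| / 2) *:
     @Eh R (invmx Gm *m (\matrix_(e, f) W e f i 0) *m (invmx Gm)^T)) a b.
Proof.
rewrite /hodge2 mxE [RHS]mxE; congr (_ * _).
rewrite summxE /Eh mxE; apply: eq_bigr => c _; rewrite summxE.
apply: eq_bigr => d _; rewrite conj_entry mulr_sum2 summxE.
apply: eq_bigr => e _; rewrite summxE; apply: eq_bigr => f _.
by rewrite !mxE; ring.
Qed.

Lemma omega_sum (xi : 'cV[R]_(nv + nv)) (s : 'I_4 -> R) (et : 'I_4 -> 'cV[R]_(nv + nv)) :
  Defs.omega xi (\sum_d s d *: et d) = \sum_d s d * Defs.omega xi (et d).
Proof.
rewrite /Defs.omega mulmx_sumr summxE; apply: eq_bigr => d _.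
by rewrite -scalemxAr mxE.
Qed.

Lemma bilE (Ix : 'M[R]_nv) (p q : 'cV[R]_nv) :
  (p^T *m Ix *m q) 0 0 = \sum_L \sum_S Ix L S * (p L 0 * q S 0).
Proof.
rewrite mxE exchange_big; apply: eq_bigr => S _; rewrite !mxE mulr_suml.
by apply: eq_bigr => L _; rewrite !mxE; ring.
Qed.

Lemma omega_alg (Rx Ix : 'M[R]_nv) (f hf f' hf' : 'cV[R]_nv) : Rx^T = Rx -> Ix^T = Ix ->
  (Rx *m f - Ix *m hf)^T *m - hf' - f^T *m - (Ix *m f' + Rx *m hf')
  = f^T *m Ix *m f' + hf^T *m Ix *m hf'.
Proof.
move=> RT IT.
rewrite linearB /= !trmx_mul RT IT !mulmxN opprK mulmxBl mulmxDr !mulmxA opprB.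
rewrite addrC -!addrA; congr (_ + _).
by rewrite addrC -addrA addNr addr0.
Qed.
End V.

Lemma ex22g (R : realType) (I1 I2 I3 I4 : finType) (g : I1 -> I2 -> I3 -> I4 -> R) :
  \sum_c \sum_d \sum_e \sum_f g c d e f = \sum_e \sum_f \sum_c \sum_d g c d e f.
Proof.
under eq_bigr do under eq_bigr do rewrite pair_big /=.
rewrite pair_big /= exchange_big /=.
under [RHS]eq_bigr do under eq_bigr do rewrite pair_big /=.
rewrite [RHS]pair_big /=.
by apply: eq_bigr => q _; apply: eq_bigr.
Qed.

Lemma entry_XHY (R : realType) (X H Y : 'M[R]_4) a b :
  (X *m H^T *m Y^T) a b = \sum_c \sum_d H d c * X a c * Y b d.
Proof.
rewrite mxE; under eq_bigr => d _ do rewrite mxE [Y^T _ _]mxE mulr_suml.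
rewrite exchange_big; apply: eq_bigr => c _; apply: eq_bigr => d _; rewrite mxE; ring.
Qed.

Lemma mulr_sum2g (R : realType) (I1 I2 : finType) (F : I1 -> I2 -> R) x :
  x * (\sum_c \sum_d F c d) = \sum_c \sum_d x * F c d.
Proof. rewrite mulr_sumr; apply: eq_bigr => c _; by rewrite mulr_sumr. Qed.


Theorem lemma2p15 (R : realType) (ns nv : nat)
  (U : set 'rV[R]_4) (o : bool) (Vs : set 'rV[R]_ns)
  (J : 'rV[R]_ns -> 'M[R]_(nv + nv)) (Rm Im : 'rV[R]_ns -> 'M[R]_nv)
  (g : 'rV[R]_4 -> 'M[R]_4) (phi : 'rV[R]_4 -> 'rV[R]_ns)
  (V : 'rV[R]_4 -> form2 R (nv + nv)) :
  open U -> U !=set0 -> contractible U -> relatively_compact U ->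
  open Vs ->
  taming_map Vs J ->
  em_structure Vs Rm Im ->
  (forall y, Vs y -> J y = gamma_mx (Rm y) (Im y)) ->
  lorentzian_metric U g ->
  (forall i, smooth_on U (fun x => phi x 0 i)) ->
  (forall x, U x -> Vs (phi x)) ->
  (forall a b A, smooth_on U (fun x => V x a b A 0)) ->
  (forall x, U x -> antisym (V x)) ->
  (forall x, U x -> forall a b,
      hodge2 o (g x) (V x) a b = - (J (phi x) *m V x a b)) ->
  forall x, U x -> forall a b : 'I_4,
    let I := Im (phi x) in
    let F := Fpart (V x) in
    let Fup := Fpart (raise2 (g x) (V x)) in
    let Fupup := Fpart (raise_both (g x) (V x)) in
    2 * (\sum_(L < nv) \sum_(S < nv) I L S * \sum_(c < 4) F a c L * Fup b c S)
    - 2^-1 * g x a b *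
      (\sum_(L < nv) \sum_(S < nv) I L S *
         \sum_(c < 4) \sum_(d < 4) F c d L * Fupup c d S)
    = \sum_(c < 4) omega (V x a c) (J (phi x) *m raise2 (g x) (V x) b c).
Proof.
move=> _ _ _ _ _ _ [_ [_ emR]] Jgam [_ lor] _ phiV _ antiV hodgeV x Ux a b I F Fup Fupup.
have Vy := phiV x Ux.
have [RT [IT IPD]] := emR _ Vy.
have IU := @posdef_unit R nv _ IPD.
have [GT [P [PU HP]]] := lor x Ux.
have JE := Jgam _ Vy.
have hh := hodgeV x Ux. have aW := antiV x Ux.
rewrite /F /Fup /Fupup /I {F Fup Fupup I}.
move: JE hh aW RT IT IU.
set Gm := g x. set W := V x. set Jx := J (phi x). set Rx := Rm (phi x). set Ix := Im (phi x).
move=> JE hh aW RT IT IU.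
set H := invmx Gm.
set k := (-1) ^+ o * Num.sqrt `|\det Gm| / 2.
pose Mi i := \matrix_(e, f) W e f i 0 : 'M[R]_4.
pose Sf i := k *: @Eh R (H *m Mi i *m H^T).
have SfE c d i : (hodge2 o Gm W c d) i 0 = Sf i c d by rewrite hodge_comp.
have MiT i : (Mi i)^T = - Mi i.
  by apply/matrixP => e f; rewrite !mxE aW mxE.
have Hk : k ^+ 2 * \det P ^+ 2 = 4^-1.
  have D : \det Gm * \det P ^+ 2 = -1.
    by rewrite -(det_eta R) -HP !det_mulmx det_tr; ring.
  have Dle : \det Gm <= 0.
    have := sqr_ge0 (\det P); nra.
  rewrite /k !exprMn sqr_sqrtr ?normr_ge0 // ler0_norm //.
  have -> : ((-1) ^+ o) ^+ 2 = 1 :> R by rewrite -exprM mulnC exprM sqrrN !expr1n.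
  transitivity (- (\det Gm * \det P ^+ 2) * 2^-1 ^+ 2); first by ring.
  by rewrite D opprK mul1r exprVn expr2 -natrM.
pose A L := Mi (lshift nv L). pose SA L := Sf (lshift nv L).
pose T (X Y : 'M[R]_4) := \sum_c \sum_d H d c * X a c * Y b d.
pose QQ L S := \sum_c \sum_d A L c d * (H *m A S *m H^T) c d.
have KE L S : T (SA L) (SA S) = T (A S) (A L) - 2^-1 * QQ L S * Gm a b.
  have := @key R Gm P k _ _ PU HP Hk (MiT (lshift nv L)) (MiT (lshift nv S)).
  move/(congr1 (fun M : 'M[R]_4 => M a b)).
  rewrite entry_XHY [in X in _ = X -> _]mxE => E; apply: (eq_trans E).
  rewrite entry_XHY !mxE; congr (_ - _).
have L1 L S : \sum_c Fpart W a c L * Fpart (raise2 Gm W) b c S = T (A L) (A S).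
  rewrite /T; apply: eq_bigr => c _; rewrite /Fpart /raise2 !mxE summxE mulr_sumr.
  by apply: eq_bigr => d _; rewrite !mxE; ring.
have L2 L S : \sum_c \sum_d Fpart W c d L * Fpart (raise_both Gm W) c d S = QQ L S.
  rewrite /QQ; apply: eq_bigr => c _; apply: eq_bigr => d _.
  rewrite conj_entry /Fpart /raise_both !mxE summxE; congr (_ * _).
  apply: eq_bigr => e _; rewrite summxE; apply: eq_bigr => f _.
  by rewrite !mxE.
under eq_bigr do under eq_bigr do rewrite L1.
under [X in _ - _ * X]eq_bigr do under eq_bigr do rewrite L2.
have BE c' d' : dsubmx (W c' d') = Rx *m usubmx (W c' d') - Ix *m usubmx (hodge2 o Gm W c' d')
    /\ dsubmx (hodge2 o Gm W c' d') = Ix *m usubmx (W c' d') + Rx *m usubmx (hodge2 o Gm W c' d').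
  by apply: block_eqs IU _; rewrite !vsubmxK hh JE.
have OM c d : Defs.omega (W a c) (- hodge2 o Gm W b d)
    = \sum_L \sum_S Ix L S * (A L a c * A S b d + SA L a c * SA S b d).
  rewrite -[W a c]vsubmxK -[hodge2 o Gm W b d]vsubmxK opp_col_mx omega_col.
  have [g1 _] := BE a c; have [_ h2] := BE b d.
  have US (X : 'cV[R]_(nv + nv)) L : usubmx X L 0 = X (lshift nv L) 0 by rewrite mxE.
  rewrite g1 h2 omega_alg // mxE !bilE -big_split /=; apply: eq_bigr => L _.
  rewrite -big_split /=; apply: eq_bigr => S _.
  by rewrite -mulrDr !US !SfE /A /SA /Mi !mxE.
have RH : \sum_c Defs.omega (W a c) (Jx *m raise2 Gm W b c)
    = \sum_L \sum_S Ix L S * (T (A L) (A S) + T (SA L) (SA S)).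
  transitivity (\sum_c \sum_d H d c * Defs.omega (W a c) (- hodge2 o Gm W b d)).
    apply: eq_bigr => c _; rewrite /raise2 mulmx_sumr -omega_sum.
    by congr (Defs.omega _ _); apply: eq_bigr => d _; rewrite -scalemxAr hh opprK.
  under eq_bigr do under eq_bigr do rewrite OM mulr_sum2g.
  rewrite ex22g; apply: eq_bigr => L _; apply: eq_bigr => S _.
  rewrite /T -big_split /= mulr_sumr; apply: eq_bigr => c _.
  rewrite -big_split /= mulr_sumr; apply: eq_bigr => d _; ring.
rewrite RH.
have IS L S : Ix L S = Ix S L by rewrite -{1}IT mxE.
have SW : \sum_L \sum_S Ix L S * T (A S) (A L) = \sum_L \sum_S Ix L S * T (A L) (A S).
  by rewrite exchange_big; apply: eq_bigr => L _; apply: eq_bigr => S _; rewrite IS.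
have E1 : \sum_L \sum_S Ix L S * (T (A L) (A S) + T (SA L) (SA S)) =
   (\sum_L \sum_S Ix L S * T (A L) (A S) + \sum_L \sum_S Ix L S * T (A S) (A L))
   - 2^-1 * Gm a b * \sum_L \sum_S Ix L S * QQ L S.
  rewrite mulr_sum2g -big_split -sumrB; apply: eq_bigr => L _.
  rewrite -big_split -sumrB; apply: eq_bigr => S _; rewrite KE /=; ring.
rewrite E1 SW; ring.
Qed.
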